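(* Let $N \ge 1$ be an integer and $p \in [0,1]$. Let $(K_1, K_2, K_3)$ be a multinomially distributed random vector with $N$ trials and cell probabilities $(1-p)^2$, $2(1-p)p$, $p^2$, i.e. \[ \Pr[K_1=k_1,K_2=k_2,K_3=k_3]=\binom{N}{k_1,k_2,k_3}(1-p)^{2k_1}\bigl(2(1-p)p\bigr)^{k_2}p^{2k_3} \] for nonnegative integers with $k_1+k_2+k_3=N$. Define \[ g(k_1,k_2)=\begin{cases}1 & \text{if } k_1=0 \text{ and } k_2=0,\\ 0 & \text{if } k_1>0 \text{ and } k_2=0,\\ \dfrac{k_2}{2k_1+k_2} & \text{otherwise.}\end{cases} \] Then \[ E[g(K_1,K_2)]=\frac{2N\,(p-p^{2N})}{2N-1}+p^{2N}. \]
   Context: This models $N$ RFID tags read in two independent reader sessions, where each tag is independently unread in each session with probability $p$; $K_1$ is the number of tags read in both sessions, $K_2$ the number read in exactly one session, $K_3$ the number read in neither. The quantity $g(K_1,K_2)$ is the estimator $\hat p$ of $p$. *)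

(* Defs.v *)
From mathcomp Require Import all_boot all_order all_algebra.
Set Implicit Arguments. Unset Strict Implicit. Unset Printing Implicit Defensive.
Import Order.TTheory GRing.Theory Num.Theory.
Local Open Scope ring_scope.

Definition multinom (R : fieldType) (N k1 k2 k3 : nat) : R :=
  (N`!)%:R / ((k1`!)%:R * (k2`!)%:R * (k3`!)%:R).

Definition rfid_pmf (R : fieldType) (N : nat) (p : R) (k1 k2 k3 : nat) : R :=
  if (k1 + k2 + k3 == N)%N then
    multinom R N k1 k2 k3 * (1 - p) ^+ (2 * k1) * (2%:R * (1 - p) * p) ^+ k2
      * p ^+ (2 * k3)
  else 0.

Definition g_est (R : fieldType) (k1 k2 : nat) : R :=
  if (k1 == 0%N) && (k2 == 0%N) then 1
  else if (k2 == 0%N) then 0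
  else k2%:R / ((2 * k1 + k2)%N)%:R.

Definition expect_g (R : fieldType) (N : nat) (p : R) : R :=
  \sum_(k1 < N.+1) \sum_(k2 < N.+1) \sum_(k3 < N.+1)
     rfid_pmf N p k1 k2 k3 * g_est R k1 k2.

(* Main.v *)
Require Import Defs.
From mathcomp Require Import all_boot all_order all_algebra.
From mathcomp Require Import ring lra zify.
Import Order.TTheory GRing.Theory Num.Theory.
Local Open Scope ring_scope.

Section S.
Variable R : realFieldType.

Lemma multinomE N k1 k2 k3 : (k1 + k2 + k3 = N)%N ->
  multinom R N k1 k2 k3 = ('C(N,k2) * 'C(N-k2,k1))%:R.
Proof.
move=> e; rewrite /multinom.
have h1 : (N`! = 'C(N,k2) * 'C(N-k2,k1) * (k1`! * k2`! * k3`!))%N.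
  rewrite -(bin_fact (_ : (k2 <= N)%N)); last lia.
  have -> : (N - k2)`! = ('C(N-k2,k1) * (k1`! * k3`!))%N.
    rewrite -(bin_fact (_ : (k1 <= N-k2)%N)); last lia.
    by have -> : (N - k2 - k1 = k3)%N by lia.
  ring.
rewrite h1 -!natrM [X in X / _]natrM mulfK // pnatr_eq0 -lt0n !muln_gt0 !fact_gt0.
done.
Qed.

Definition T N k1 k2 : R := ('C(N,k2) * 'C(N-k2,k1) * 2^k2)%:R.
Definition G N (p : R) s : R := (1 - p) ^+ s * p ^+ (2 * N - s) / s%:R.

Lemma step1a N (p : R) k1 k2 : (k2 <= N)%N ->
  \sum_(k3 < N.+1) rfid_pmf N p k1 k2 k3 =
  T N k1 k2 * (1 - p) ^+ (2 * k1 + k2) * p ^+ (2 * N - (2 * k1 + k2)).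
Proof.
move=> hk2.
have [hle|hgt] := leqP (k1 + k2) N.
  have hlt : (N - k1 - k2 < N.+1)%N by lia.
  rewrite (bigD1 (Ordinal hlt)) //= big1 ?addr0; last first.
    move=> i hi; rewrite /rfid_pmf ifN //; apply/eqP => h.
    move/eqP: hi; apply; apply/val_inj => /=; lia.
  rewrite /rfid_pmf ifT; last by apply/eqP; lia.
  rewrite multinomE; last lia.
  have -> : (2 * N - (2 * k1 + k2) = 2 * (N - k1 - k2) + k2)%N by lia.
  rewrite /T !exprD !exprMn !natrM !natrX; ring.
rewrite big1; last first.
  by move=> i _; rewrite /rfid_pmf ifN //; apply/eqP; lia.
rewrite /T (@bin_small (N - k2) k1); last lia.
by rewrite muln0 mul0n !mul0r.
Qed.

Lemma step1b N (p : R) k1 k2 :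
  T N k1 k2 * (1 - p) ^+ (2 * k1 + k2) * p ^+ (2 * N - (2 * k1 + k2)) * g_est R k1 k2
  = (if (k1 == 0%N) && (k2 == 0%N) then p ^+ (2 * N) else 0)
    + T N k1 k2 * k2%:R * G N p (2 * k1 + k2).
Proof.
rewrite /g_est /G; have [->|k1n] := eqVneq k1 0%N; have [->|k2n] := eqVneq k2 0%N => /=.
- by rewrite /T !bin0 !(muln0, mul1n, addn0, subn0, expr0, expn0, mulr0, mul0r, addr0, mul1r, mulr1).
- by rewrite add0r; ring.
- by rewrite !(mulr0, mul0r, add0r, mulr0n).
- by rewrite add0r; ring.
Qed.


Lemma step2 N (p : R) : expect_g N p =
  p ^+ (2 * N) + \sum_(k1 < N.+1) \sum_(k2 < N.+1) T N k1 k2 * k2%:R * G N p (2 * k1 + k2).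
Proof.
rewrite /expect_g.
transitivity (\sum_(k1 < N.+1) \sum_(k2 < N.+1) ((if (k1 == 0%N :> nat) && (k2 == 0%N :> nat) then p ^+ (2 * N) else 0) + T N k1 k2 * k2%:R * G N p (2 * k1 + k2))).
  apply: eq_bigr => k1 _; apply: eq_bigr => k2 _.
  by rewrite -big_distrl /= step1a ?step1b // -ltnS.
rewrite (eq_bigr (fun k1 : 'I_N.+1 => (if (k1 == 0%N :> nat) then p^+(2*N) else 0) + \sum_(k2 < N.+1) T N k1 k2 * k2%:R * G N p (2 * k1 + k2))); last first.
  move=> k1 _; rewrite big_split /=; congr (_ + _).
  rewrite (bigD1 ord0) //= big1 ?addr0; first by case: (k1 == 0%N :> nat).
  by move=> i; case: i => [[|i] ?] //= _; rewrite andbF.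
rewrite big_split /=; congr (_ + _).
rewrite (bigD1 ord0) //= big1 ?addr0 //.
by move=> i; case: i => [[|i] ?] //= _.
Qed.

Definition L N (p : R) (P : {poly R}) := \sum_(s < (2*N).+1) P`_s * G N p s.

Lemma L_sum N p I (r : seq I) (Pr : pred I) (F : I -> {poly R}) :
  L N p (\sum_(i <- r | Pr i) F i) = \sum_(i <- r | Pr i) L N p (F i).
Proof.
rewrite /L; under eq_bigr do rewrite coef_sum big_distrl /=.
exact: exchange_big.
Qed.

Lemma L_X N p e n : L N p ('X^e *+ n) = n%:R * (if (e <= 2*N)%N then G N p e else 0).
Proof.
rewrite /L; under eq_bigr do rewrite coefMn coefXn.
have [he|he] := leqP e (2*N).
  rewrite (bigD1 (Ordinal (he : (e < (2*N).+1)%N))) //= eqxx big1 ?addr0 //.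
  move=> s hs; rewrite (_ : (s == e :> nat) = false) ?mul0rn ?mul0r //.
  apply/negbTE; apply: contra hs => /eqP h; apply/eqP/val_inj => /=; exact h.
rewrite mulr0 big1 // => s _.
rewrite (_ : (s == e :> nat) = false) ?mul0rn ?mul0r //.
apply/negbTE/eqP; have := ltn_ord s; lia.
Qed.

Definition P N : {poly R} := \sum_(k1 < N.+1) \sum_(k2 < N.+1)
   'X^(2 * k1 + k2) *+ ('C(N,k2) * 'C(N-k2,k1) * 2^k2 * k2).

Lemma step3 N p : \sum_(k1 < N.+1) \sum_(k2 < N.+1) T N k1 k2 * k2%:R * G N p (2 * k1 + k2)
  = L N p (P N).
Proof.
rewrite /P L_sum; apply: eq_bigr => k1 _; rewrite L_sum; apply: eq_bigr => k2 _.
rewrite L_X; case: ifP => h; first by rewrite /T [in RHS]natrM.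
have hk2 := ltn_ord k2.
rewrite /T (@bin_small (N - k2) k1); last lia.
by rewrite !(muln0, mul0n, mul0r, mulr0).
Qed.

Lemma binw (x : {poly R}) n N : (n <= N)%N ->
  \sum_(i < N.+1) x ^+ i *+ 'C(n, i) = (x + 1) ^+ n.
Proof.
move=> hn; rewrite exprD1n (big_ord_widen _ (fun i => x ^+ i *+ 'C(n, i)) (_ : (n.+1 <= N.+1)%N)) // [RHS]big_mkcond /=.
by apply: eq_bigr => i _; case: ifP => // h; rewrite bin_small ?mulr0n //; lia.
Qed.

Lemma step4 M : P (M.+1) = ('X *+ 2 *+ M.+1) * ('X + 1) ^+ (2 * M).
Proof.
rewrite /P exchange_big /=.
transitivity (\sum_(k2 < M.+2) (('X^k2 : {poly R}) *+ ('C(M.+1,k2) * 2^k2 * k2)) * ('X^2 + 1) ^+ (M.+1 - k2)).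
  apply: eq_bigr => k2 _.
  rewrite -(@binw ('X^2) (M.+1 - k2) M.+1 (leq_subr _ _)) big_distrr /=.
  apply: eq_bigr => k1 _.
  rewrite mulrnAr mulrnAl -mulrnA -exprM -exprD.
  congr (_ *+ _); first by rewrite addnC.
  by rewrite -!mulnA; congr (_ * _)%N; rewrite mulnC mulnA.
rewrite big_ord_recl /= muln0 mulr0n mul0r add0r.
have -> : ('X + 1) ^+ (2 * M) = (('X^2 + 1) + 'X *+ 2) ^+ M :> {poly R}.
  rewrite exprM; congr (_ ^+ _). by rewrite sqrrD1 addrAC.
rewrite exprDn big_distrr; apply: eq_bigr => j _ /=.
rewrite /bump /= add1n subSS.
have h : (M.+1 * 'C(M, j) = j.+1 * 'C(M.+1, j.+1))%N := mul_bin_diag M.+1 j.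
have e : ('C(M.+1,j.+1) * 2^j.+1 * j.+1 = 2^j.+1 * (M.+1 * 'C(M,j)))%N.
  rewrite h; set a := binomial _ _; set b := expn _ _.
  by rewrite mulnAC mulnC (mulnC a).
move: ('X : {poly R}) (('X^2 + 1) ^+ (M - j) : {poly R}) => x y.
rewrite e exprMn_n -mulrnA mulrnAr !mulrnAl mulrnAr -!mulrnA exprS mulrnAr -mulrnA.
congr (_ *+ _); first by rewrite -mulrA (mulrC y).
rewrite expnS; set a := binomial _ _; set b := expn _ _.
clearbody a b; ring.
Qed.

Lemma step5 M p : L M.+1 p (('X *+ 2 *+ M.+1) * ('X + 1) ^+ (2 * M)) =
  \sum_(j < (2 * M).+1) (2 * M.+1 * 'C(2 * M, j))%:R * G M.+1 p j.+1.
Proof.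
rewrite exprD1n big_distrr L_sum; apply: eq_bigr => j _.
transitivity (L M.+1 p ('X^(j.+1) *+ (2 * M.+1 * 'C(2 * M, j)))).
  congr (L _ _ _); rewrite /=.
  rewrite -mulrnA mulrnAl mulrnAr -mulrnA exprS.
  by rewrite (mulnC 'C(2 * M, j)).
rewrite L_X ifT //; have := ltn_ord j; lia.
Qed.

Lemma step6 M (p : R) : \sum_(j < (2 * M).+1) (2 * M.+1 * 'C(2 * M, j))%:R * G M.+1 p j.+1
  = (2 * M.+1)%:R / ((2 * M).+1)%:R * p * (1 - p ^+ (2 * M).+1).
Proof.
have hs : \sum_(j < (2*M).+1) p ^+ ((2*M).+1 - j.+1) * (1-p) ^+ j.+1 *+ 'C((2*M).+1, j.+1)
    = 1 - p ^+ (2*M).+1.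
  have := exprDn p (1 - p) (2*M).+1.
  rewrite big_ord_recl /= subn0 expr0 mulr1 bin0 mulr1n addrC subrK expr1n.
  move=> h; rewrite [in RHS]h addrAC subrr add0r.
  by apply: eq_bigr => i _; rewrite /bump /= add1n.
rewrite -hs mulr_sumr; apply: eq_bigr => j _.
have hj := ltn_ord j.
have ex : (2 * M.+1 - j.+1 = ((2 * M).+1 - j.+1).+1)%N by lia.
rewrite /G ex [p ^+ _.+1]exprS.
have hb : ((2 * M).+1 * 'C(2 * M, j) = j.+1 * 'C((2 * M).+1, j.+1))%N := mul_bin_diag (2 * M).+1 j.
have hC : ('C((2 * M).+1, j.+1))%:R = ((2 * M).+1)%:R * ('C(2 * M, j))%:R / (j.+1)%:R :> R.
  by rewrite -natrM hb natrM mulrC mulKf // pnatr_eq0.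
have n1 : (j.+1)%:R != 0 :> R by rewrite pnatr_eq0.
have n2 : ((2 * M).+1)%:R != 0 :> R by rewrite pnatr_eq0.
rewrite -(mulr_natr _ 'C((2 * M).+1, j.+1)) hC natrM.
have hj0 : 0 <= j%:R :> R := ler0n R j.
have hM0 : 0 <= M%:R :> R := ler0n R M.
field; apply/andP; split; apply: lt0r_neq0; lra.
Qed.

End S.

Theorem lemma1 (R : realFieldType) (N : nat) (p : R) :
  (1 <= N)%N -> 0 <= p -> p <= 1 ->
  expect_g N p =
    (2 * N)%N%:R * (p - p ^+ (2 * N)) / ((2 * N)%N%:R - 1) + p ^+ (2 * N).
Proof.
move=> hN _ _; case: N hN => [//|M] _.
rewrite step2 step3 step4 step5 step6.
have -> : ((2 * M.+1)%N%:R - 1 = ((2 * M).+1)%:R :> R).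
  rewrite (_ : (2 * M.+1 = ((2 * M).+1).+1)%N); last lia.
  by rewrite -natr1 addrK.
have -> : p ^+ (2 * M.+1) = p * p ^+ (2 * M).+1.
  by rewrite -exprS; congr (_ ^+ _); lia.
ring.
Qed.
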